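(* Let $G$ be a grid-labelled graph of type $(a,b)$ with $m\ge 1$ edges, none of which is diagonal. Let $\rho_0=|1\rangle\langle 1|\otimes|1\rangle\langle 1|$ on $\mathbb{C}^a\otimes\mathbb{C}^b$. Then there exist local unitaries $U_1,\dots,U_m$ (each of the form $U_x=V_x\otimes W_x$ with $V_x$ unitary on $\mathbb{C}^a$ and $W_x$ unitary on $\mathbb{C}^b$), one for each edge, such that $$\rho(G)=\frac{1}{m}\sum_{x=1}^m U_x\rho_0U_x^\dagger .$$ In particular $\rho(G)$ can be obtained from $\rho_0$ by a protocol using only local unitaries and $\log m$ bits of classical communication (one party samples $x\in[m]$ uniformly and sends it to the other).
   Context: A grid-labelled graph of type $(a,b)$ is a simple graph $G$ whose vertex set is the grid $[a]\times[b]$. Its combinatorial Laplacian is $L(G)=D(G)-A(G)$ (degree matrix minus adjacency matrix), indexed by vertices. If $G$ has $m\ge1$ edges, $\rho(G)=L(G)/(2m)$, viewed as a density matrix on $\mathbb{C}^a\otimes\mathbb{C}^b$ with vertex $(i,j)$ corresponding to the standard basis vector $|i\rangle\otimes|j\rangle$; equivalently $\rho(G)=\frac1m\sum_{\{(i,j),(k,l)\}\in E(G)}|\psi\rangle\langle\psi|$ with $|\psi\rangle=\frac{1}{\sqrt2}(|i\rangle|j\rangle-|k\rangle|l\rangle)$. An edge $\{(i,j),(k,l)\}$ is horizontal if $i=k$, vertical if $j=l$, and diagonal if $i\neq k$ and $j\neq l$. *)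

(* Defs.v *)
From HB Require Import structures.
From mathcomp Require Import all_boot all_order all_algebra.
From mathcomp Require Import sesquilinear spectral.
Set Implicit Arguments. Unset Strict Implicit. Unset Printing Implicit Defensive.
Import Order.TTheory GRing.Theory Num.Theory.
Local Open Scope ring_scope.

Section Grid.
Variable C : numClosedFieldType.

Definition adjmx m n (M : 'M[C]_(m, n)) : 'M[C]_(n, m) := (M ^t Num.conj)%sesqui.

(* basis index of |i> (x) |j> in C^a (x) C^b: the library bijection mxvec_index *)
Definition tidx a b (i : 'I_a) (j : 'I_b) : 'I_(a * b) := mxvec_index i j.

Definition kron a b (A : 'M[C]_a) (B : 'M[C]_b) : 'M[C]_(a * b) :=
  \sum_(i1 : 'I_a) \sum_(i2 : 'I_a) \sum_(j1 : 'I_b) \sum_(j2 : 'I_b)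
     (A i1 i2 * B j1 j2) *: delta_mx (tidx i1 j1) (tidx i2 j2).

Definition proj1 n : 'M[C]_n :=
  \matrix_(i, j) (((i : nat) == 0%N) && ((j : nat) == 0%N))%:R.

Definition rho0 a b : 'M[C]_(a * b) := kron (proj1 a) (proj1 b).

Definition simple_grid_graph a b (E : {set {set 'I_a * 'I_b}}) : Prop :=
  forall e, e \in E -> #|e| = 2%N.

Definition degree a b (E : {set {set 'I_a * 'I_b}}) (u : 'I_a * 'I_b) : nat :=
  #|[set e in E | u \in e]|.

Definition lap_entry a b (E : {set {set 'I_a * 'I_b}}) (u v : 'I_a * 'I_b) : C :=
  if u == v then (degree E u)%:R else - ((([set u; v] \in E) : nat)%:R).

Definition laplacian a b (E : {set {set 'I_a * 'I_b}}) : 'M[C]_(a * b) :=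
  \sum_(u : 'I_a * 'I_b) \sum_(v : 'I_a * 'I_b)
     lap_entry E u v *: delta_mx (tidx u.1 u.2) (tidx v.1 v.2).

Definition rhoG a b (E : {set {set 'I_a * 'I_b}}) : 'M[C]_(a * b) :=
  (2 * #|E|)%:R^-1 *: laplacian E.

Definition no_diagonal_edge a b (E : {set {set 'I_a * 'I_b}}) : Prop :=
  forall e, e \in E -> forall u v, u \in e -> v \in e ->
    (u.1 == v.1) || (u.2 == v.2).

End Grid.

(* Main.v *)
Require Import Defs.
From HB Require Import structures.
From mathcomp Require Import all_boot all_order all_algebra.
From mathcomp Require Import sesquilinear spectral.
From mathcomp Require Import ring.
Set Implicit Arguments. Unset Strict Implicit. Unset Printing Implicit Defensive.
Import Order.TTheory GRing.Theory Num.Theory.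
Local Open Scope ring_scope.

Section S.
Variable C : numClosedFieldType.
Local Notation adj := (@adjmx C _ _).

Lemma adjE m n (A : 'M[C]_(m, n)) i j : adj A i j = (A j i)^*.
Proof. by rewrite /adjmx !mxE. Qed.

Lemma adjmxB m n (A B : 'M[C]_(m, n)) : adj (A - B) = adj A - adj B.
Proof. by apply/matrixP => i j; rewrite !(adjE, mxE) rmorphB. Qed.

Lemma adjmxZ m n k (A : 'M[C]_(m, n)) : adj (k *: A) = k^* *: adj A.
Proof. by apply/matrixP => i j; rewrite !(adjE, mxE) rmorphM. Qed.

Lemma adjmxM m n p (A : 'M[C]_(m, n)) (B : 'M[C]_(n, p)) :
  adj (A *m B) = adj B *m adj A.
Proof.
apply/matrixP => i j; rewrite !(adjE, mxE) rmorph_sum; apply: eq_bigr => k _.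
by rewrite !adjE rmorphM mulrC.
Qed.

Lemma adjmxK m n (A : 'M[C]_(m, n)) : adj (adj A) = A.
Proof. by apply/matrixP => i j; rewrite !adjE conjCK. Qed.

Lemma adjmx1 n : adj (1%:M : 'M[C]_n) = 1%:M.
Proof. by apply/matrixP => i j; rewrite !(adjE, mxE) eq_sym rmorph_nat. Qed.

Lemma unitary_adj n (U : 'M[C]_n) : U *m adj U = 1%:M -> U \is unitarymx.
Proof. by move=> H; apply/unitarymxP; exact: H. Qed.


Lemma sum_only1 (T : finType) (x : T) (F : T -> C) :
  (forall k, k != x -> F k = 0) -> \sum_k F k = F x.
Proof. by move=> H; rewrite (bigD1 x) //= big1 ?addr0 // => k /H. Qed.
Arguments sum_only1 {T} x {F}.

Lemma mul_e_l n (A : 'cV[C]_n.+1) :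
  adj (delta_mx 0 0 : 'cV[C]_n.+1) *m A = (A 0 0)%:M.
Proof.
apply/matrixP => i j; rewrite !ord1 !mxE (sum_only1 0) => [|k k0].
  by rewrite adjE mxE !eqxx conjC1 mul1r.
by rewrite adjE mxE (negbTE k0) conjC0 mul0r.
Qed.

Lemma mul_e_r n (A : 'cV[C]_n.+1) :
  adj A *m (delta_mx 0 0 : 'cV[C]_n.+1) = ((A 0 0)^*)%:M.
Proof.
apply/matrixP => i j; rewrite !ord1 !mxE (sum_only1 0) => [|k k0].
  by rewrite adjE mxE !eqxx mulr1.
by rewrite !mxE (negbTE k0) mulr0.

Qed.

Lemma householder n (phi : 'cV[C]_n.+1) :
  adj phi *m phi = 1%:M -> phi 0 0 \is Num.real -> phi 0 0 != 1 ->
  exists U : 'M[C]_n.+1, U \is unitarymx /\ forall i, U i 0 = phi i 0.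
Proof.
move=> nphi rphi phi1.
pose e : 'cV[C]_n.+1 := delta_mx 0 0.
pose w := e - phi.
pose c := 2 - 2 * phi 0 0.
have cphi : (phi 0 0)^* = phi 0 0 by exact: conj_Creal.
have c0 : c != 0.
  rewrite /c subr_eq0; apply: contra phi1 => /eqP H.
  by apply/eqP; apply: (mulfI (x := 2)) => //; [rewrite pnatr_eq0 | rewrite mulr1].
have cc : c^* = c by rewrite /c rmorphB rmorphM; rewrite -/(Num.conj _) -/(Num.conj (phi 0 0)) cphi !rmorph_nat.
have ww : adj w *m w = c%:M.
  rewrite /w adjmxB mulmxBl !mulmxBr mul_e_l nphi mul_e_r cphi.
  rewrite mul_e_l; apply/matrixP => i j; rewrite !ord1 !mxE !eqxx /= !mulr1n /c.
  ring.
have we : adj w *m e = (1 - phi 0 0)%:M.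
  rewrite /w adjmxB mulmxBl [adj phi *m _]mul_e_r [adj e *m _]mul_e_l; apply/matrixP => i j.
  by rewrite !ord1 !mxE !eqxx /= !mulr1n cphi.
pose k := 2 / c.
have kc : k^* = k.
  by rewrite /k rmorphM rmorphV ?unitfE // rmorph_nat; congr (_ / _); exact: cc.
pose X := w *m adj w.
have XX : X *m X = c *: X.
  by rewrite /X mulmxA -[w *m _ *m w]mulmxA ww mul_mx_scalar -scalemxAl.
have aX : adj X = X by rewrite /X adjmxM adjmxK.
exists (1%:M - k *: X); split.
  apply: unitary_adj; rewrite adjmxB adjmx1 adjmxZ kc aX.
  rewrite mulmxBl !mulmxBr !mul1mx mulmx1 -scalemxAl -scalemxAr XX scalerA.
  rewrite scalerA.
  have -> : k * k * c = k *+ 2.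
    by rewrite -mulrA /k mulfVK // mulr_natr.
  by rewrite -scalerMnl mulr2n opprB addrK subrK.
move=> i.
have -> : (1%:M - k *: X) i 0 = ((1%:M - k *: X) *m e) i 0.
  rewrite [RHS]mxE (sum_only1 0) => [|j j0]; first by rewrite [e _ _]mxE !eqxx mulr1.
  by rewrite [e _ _]mxE (negbTE j0) mulr0.
rewrite mulmxBl mul1mx -scalemxAl /X -mulmxA we mul_mx_scalar scalerA.
suff -> : k * (1 - phi 0 0) = 1 by rewrite scale1r /w opprB addrC subrK.
have hc : c = 2 * (1 - phi 0 0) by rewrite /c; ring.
by rewrite /k mulrAC -hc mulfV.
Qed.


Definition sq : C := (sqrtC 2)^-1.
Lemma sq_ge0 : 0 <= sq. Proof. by rewrite /sq invr_ge0 sqrtC_ge0 ler0n. Qed.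
Lemma sq_conj : sq^* = sq. Proof. exact: geC0_conj sq_ge0. Qed.
Lemma sq_real : sq \is Num.real. Proof. exact: ger0_real sq_ge0. Qed.
Lemma sq2 : sq * sq = 2^-1.
Proof. by rewrite /sq -invfM -expr2 sqrtCK. Qed.
Lemma two_ne0 : (2 : C) != 0. Proof. by rewrite pnatr_eq0. Qed.

Definition vec n (j l : 'I_n.+1) : 'cV[C]_n.+1 :=
  if j == l then delta_mx j 0 else sq *: (delta_mx j 0 - delta_mx l 0).

Lemma vecE n (j l i : 'I_n.+1) :
  vec j l i 0 = if j == l then (i == j)%:R else sq * ((i == j)%:R - (i == l)%:R).
Proof. by rewrite /vec; case: eqP => _; rewrite !mxE ?andbT. Qed.

Lemma adj_delta m n (i : 'I_m) (j : 'I_n) : adj (delta_mx i j) = delta_mx j i.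
Proof.
apply/matrixP => x y; rewrite adjE !mxE.
by rewrite andbC rmorph_nat.
Qed.

Lemma vec_norm n (j l : 'I_n.+1) : adj (vec j l) *m vec j l = 1%:M.
Proof.
have d1 : (delta_mx 0 0 : 'M[C]_1) = 1%:M.
  by apply/matrixP => x y; rewrite !ord1 !mxE.
rewrite /vec; case: eqP => [_|/eqP jl].
  by rewrite adj_delta mul_delta_mx.
rewrite adjmxZ -scalemxAl -scalemxAr scalerA sq_conj sq2 adjmxB !adj_delta.
rewrite mulmxBl !mulmxBr !mul_delta_mx_cond eqxx (negbTE jl) eq_sym (negbTE jl).
rewrite !mulr0n eqxx !mulr1n subr0 sub0r opprK -mulr2n -scaler_nat scalerA mulVf ?two_ne0 // scale1r. exact: d1.
Qed.


Lemma sq_ne1 : (sq != 1) && (- sq != 1).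
Proof.
have h (x : C) : x * x = 2^-1 -> x != 1.
  move=> H; apply/eqP => x1; move: H; rewrite x1 mulr1 => /esym/eqP.
  by rewrite invr_eq1 pnatr_eq1.
by rewrite !h // ?sq2 // mulrNN sq2.
Qed.

Lemma vec_unitary n (j l : 'I_n.+1) :
  exists U : 'M[C]_n.+1, U \is unitarymx /\ forall i, U i 0 = vec j l i 0.
Proof.
have [jl0|] := boolP ((j == l) && (j == 0)).
  case/andP: jl0 => /eqP jl /eqP j0; exists 1%:M; split.
    by apply: unitary_adj; rewrite adjmx1 mulmx1.
  by move=> i; rewrite vecE jl eqxx -jl j0 mxE.
move=> H; apply: householder; first exact: vec_norm.
  rewrite vecE; case: ifP => _; first exact: realn.
  by rewrite rpredM ?sq_real // rpredB ?realn.
rewrite vecE; case: ifP => jl.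
  move: H; rewrite jl /=; case: (eqVneq j 0) => [_ //|j0 _]. by rewrite /= eq_sym oner_eq0.
case/andP: sq_ne1 => s1 s2.
move: jl; case: (0 == j); case: (0 == l) => //= _; by rewrite ?subrr ?mulr0 ?subr0 ?sub0r ?mulr1 ?mulrN1 // eq_sym oner_eq0.
Qed.

Lemma tidx_eq a b (i k : 'I_a) (j l : 'I_b) :
  (tidx i j == tidx k l) = (i == k) && (j == l).
Proof.
rewrite /tidx /mxvec_index.
apply/eqP/andP => [/cast_ord_inj/enum_rank_inj [-> ->] //| [/eqP -> /eqP ->] //].
Qed.

Lemma kronE a b (A : 'M[C]_a) (B : 'M[C]_b) i1 j1 i2 j2 :
  kron A B (tidx i1 j1) (tidx i2 j2) = A i1 i2 * B j1 j2.
Proof.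
rewrite /kron summxE (sum_only1 i1) => [|k ki]; last first.
  have ki' : (i1 == k) = false by rewrite eq_sym (negbTE ki).
  by rewrite !summxE big1 // => ? _; rewrite !summxE big1 // => ? _;
     rewrite summxE big1 // => ? _; rewrite !mxE tidx_eq ki' /= mulr0.
rewrite summxE (sum_only1 i2) => [|k ki]; last first.
  have ki' : (i2 == k) = false by rewrite eq_sym (negbTE ki).
  by rewrite !summxE big1 // => ? _; rewrite summxE big1 // => ? _;
     rewrite !mxE !tidx_eq ki' /= andbF mulr0.
rewrite summxE (sum_only1 j1) => [|k ki]; last first.
  have ki' : (j1 == k) = false by rewrite eq_sym (negbTE ki).
  by rewrite !summxE big1 // => ? _; rewrite !mxE !tidx_eq ki' /= ?andbF ?mulr0.
rewrite summxE (sum_only1 j2) => [|k ki]; last first.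
  have ki' : (j2 == k) = false by rewrite eq_sym (negbTE ki).
  by rewrite !mxE !tidx_eq ki' /= !andbF mulr0.
by rewrite !mxE !tidx_eq !eqxx mulr1.
Qed.

Lemma tidx_surj a b (k : 'I_(a * b)) : exists i j, k = tidx i j.
Proof. by case/mxvec_indexP: k => i j; exists i, j. Qed.

Lemma rho0_delta a b :
  rho0 C a.+1 b.+1 = delta_mx (tidx 0 0) (tidx 0 0).
Proof.
apply/matrixP => k l; case/mxvec_indexP: k => i j; case/mxvec_indexP: l => i' j'.
rewrite (kronE (proj1 C a.+1) (proj1 C b.+1) i j i' j') !mxE !tidx_eq -!val_eqE /=.
by case: (i == 0 :> nat); case: (j == 0 :> nat); case: (i' == 0 :> nat);
   case: (j' == 0 :> nat); rewrite ?mulr0 ?mul0r ?mulr1.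
Qed.

Lemma entry_delta n (K : 'M[C]_n) k p q :
  (K *m delta_mx k k *m adj K) p q = K p k * (K q k)^*.
Proof.
rewrite mxE (sum_only1 k) => [|x xk].
  rewrite adjE mxE (sum_only1 k) => [|y yk]; first by rewrite mxE !eqxx mulr1.
  by rewrite mxE (negbTE yk) ?andbF mulr0.
rewrite mxE big1 ?mul0r // => y _; rewrite mxE (negbTE xk). by rewrite andbF mulr0.
Qed.


Definition fv (T : finType) (u v p : T) : C := (p == u)%:R - (p == v)%:R.
Definition gE (T : finType) (e : {set T}) (p q : T) : C :=
  ((p \in e) && (q \in e))%:R * (if p == q then 1 else -1).

Lemma fg (T : finType) (u v p q : T) : u != v ->
  fv u v p * fv u v q = gE [set u; v] p q.
Proof.
move=> uv; have vu : v != u by rewrite eq_sym.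
rewrite /fv /gE !inE.
have [->|pu] := eqVneq p u; have [->|qu] := eqVneq q u;
  rewrite ?eqxx ?(negbTE uv) ?(negbTE vu) /=.
- by rewrite subr0 mulr1.
- by case: (q == v); rewrite /= ?subr0 ?sub0r ?subrr ?mulr1 ?mul1r ?mulr0 ?mul0r ?mulrN1 ?mulN1r.
- by rewrite (negbTE pu); case: (p == v); rewrite /= ?subr0 ?sub0r ?subrr ?mulr1 ?mul1r ?mulr0 ?mul0r ?mulrN1 ?mulN1r.
have [pv|pv] := eqVneq p v; have [qv|qv] := eqVneq q v.
- by rewrite pv qv !eqxx /= sub0r mulrNN mulr1.
- by rewrite /= ?mulr0n ?sub0r ?oppr0 ?mulr0 ?mul0r.
- by rewrite /= ?mulr0n ?sub0r ?oppr0 ?mulr0 ?mul0r.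
by rewrite /= ?mulr0n ?sub0r ?oppr0 ?mulr0 ?mul0r.
Qed.


Lemma psiE a b (u v p : 'I_a.+1 * 'I_b.+1) : u != v -> (u.1 == v.1) || (u.2 == v.2) ->
  vec u.1 v.1 p.1 0 * vec u.2 v.2 p.2 0 = sq * fv u v p.
Proof.
case: u v p => [u1 u2] [v1 v2] [p1 p2] /=; rewrite /fv !xpair_eqE !vecE => uv h.
have [e1|n1] := eqVneq u1 v1.
  subst v1; rewrite eqxx /= in uv *; rewrite (negbTE uv).
  by case: (p1 == u1); rewrite /= ?mul1r ?mul0r ?mulr0n ?subr0 ?mulr0.
move: h; rewrite (negbTE n1) /= => /eqP e2; subst v2; rewrite eqxx.
by case: (p2 == u2); rewrite /= ?andbT ?andbF ?mulr1 ?mulr0 ?mulr0n ?subr0 ?mulr0.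
Qed.

Lemma fv_conj (T : finType) (u v p : T) : (fv u v p)^* = fv u v p.
Proof. by rewrite /fv rmorphB !rmorph_nat. Qed.

Lemma edge_ok a b (u v : 'I_a.+1 * 'I_b.+1) : u != v -> (u.1 == v.1) || (u.2 == v.2) ->
  exists VW : 'M[C]_a.+1 * 'M[C]_b.+1, [/\ VW.1 \is unitarymx, VW.2 \is unitarymx &
   forall p q : 'I_a.+1 * 'I_b.+1,
   (kron VW.1 VW.2 *m rho0 C a.+1 b.+1 *m adj (kron VW.1 VW.2)) (tidx p.1 p.2) (tidx q.1 q.2)
     = 2^-1 * gE [set u; v] p q].
Proof.
move=> uv huv.
have [V [uV hV]] := vec_unitary u.1 v.1.
have [W [uW hW]] := vec_unitary u.2 v.2.
exists (V, W); split => // p q /=.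
rewrite rho0_delta entry_delta !kronE !hV !hW !psiE // -fg //.
have r : sq * fv u v q \is Num.real by rewrite rpredM ?sq_real // rpredB ?realn.
rewrite (conj_Creal r).
by rewrite mulrACA sq2.
Qed.


Lemma in2 (T : finType) (e : {set T}) p q : #|e| = 2 -> p != q ->
  (p \in e) && (q \in e) = (e == [set p; q]).
Proof.
move=> ce pq; apply/idP/eqP => [/andP [pe qe]|->]; last by rewrite !inE !eqxx orbT.
apply/eqP; rewrite eq_sym eqEcard cards2 pq ce leqnn andbT.
by rewrite subUset !sub1set pe qe.
Qed.

Lemma sum_g a b (E : {set {set 'I_a * 'I_b}}) p q :
  (forall e, e \in E -> #|e| = 2) ->
  \sum_(e in E) gE e p q = lap_entry C E p q.
Proof.
move=> Hs; rewrite /lap_entry; have [<-|pq] := eqVneq p q.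
  rewrite /degree -sumr_const big_mkcond [RHS]big_mkcond /=.
  apply: eq_bigr => e _; rewrite inE /gE eqxx andbb mulr1.
  by case: (e \in E); case: (p \in e).
rewrite big_mkcond /= (sum_only1 [set p; q]) => [|e ne].
  rewrite /gE !inE !eqxx orbT /= (negbTE pq).
  by case: ([set p; q] \in E); rewrite ?mul1r ?mulr0n ?oppr0 ?mulN1r.
case eE: (e \in E) => //; rewrite /gE in2 ?Hs // (negbTE ne) (negbTE pq).
by rewrite mul0r.
Qed.

Lemma lapE a b (E : {set {set 'I_a * 'I_b}}) (p q : 'I_a * 'I_b) :
  laplacian C E (tidx p.1 p.2) (tidx q.1 q.2) = lap_entry C E p q.
Proof.
rewrite /laplacian summxE (sum_only1 p) => [|u up]; last first.
  rewrite summxE big1 // => v _; rewrite !mxE !tidx_eq.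
  suff -> : (p.1 == u.1) && (p.2 == u.2) = false by rewrite mulr0.
  by rewrite eq_sym in up; exact: (negbTE up).
rewrite summxE (sum_only1 q) => [|v vq].
  by rewrite !mxE !tidx_eq !eqxx mulr1.
rewrite !mxE !tidx_eq !eqxx /=.
suff -> : (q.1 == v.1) && (q.2 == v.2) = false by rewrite mulr0.
by rewrite eq_sym in vq; exact: (negbTE vq).
Qed.


End S.

Unset Implicit Arguments.

Theorem mainTheorem2 (C : numClosedFieldType) (a b : nat)
    (E : {set {set 'I_a * 'I_b}}) :
  simple_grid_graph E ->
  (1 <= #|E|)%N ->
  no_diagonal_edge E ->
  exists (V : 'I_#|E| -> 'M[C]_a) (W : 'I_#|E| -> 'M[C]_b),
    (forall x, V x \is unitarymx /\ W x \is unitarymx) /\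
    rhoG C E =
      (#|E|%:R)^-1 *: \sum_(x < #|E|)
          (kron (V x) (W x) *m rho0 C a b *m adjmx (kron (V x) (W x))).
Proof.
move=> Hs Hm Hnd.
case: a E Hs Hm Hnd => [|a] E Hs Hm Hnd.
  case/card_gt0P: Hm => e eE.
  have /card_gt0P [x _] : (0 < #|e|)%N by rewrite Hs.
  by case: x => [[m hm] j]; rewrite ltn0 in hm.
case: b E Hs Hm Hnd => [|b] E Hs Hm Hnd.
  case/card_gt0P: Hm => e eE.
  have /card_gt0P [x _] : (0 < #|e|)%N by rewrite Hs.
  by case: x => [i [m hm]]; rewrite ltn0 in hm.
have ex : forall x : 'I_#|E|, exists VW : 'M[C]_a.+1 * 'M[C]_b.+1,
   [/\ VW.1 \is unitarymx, VW.2 \is unitarymx &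
   forall p q : 'I_a.+1 * 'I_b.+1,
   (kron VW.1 VW.2 *m rho0 C a.+1 b.+1 *m adjmx (kron VW.1 VW.2))
      (tidx p.1 p.2) (tidx q.1 q.2) = 2^-1 * gE C (enum_val x) p q].
  move=> x; have xE : enum_val x \in E := enum_valP x.
  have /cards2P [u [v [uv he]]] : #|enum_val x| == 2 by rewrite Hs.
  rewrite he; apply: edge_ok => //.
  by apply: (Hnd _ xE); rewrite he !inE eqxx ?orbT.
have [F hF] := fin_all_exists ex.
exists (fun x => (F x).1), (fun x => (F x).2); split.
  by move=> x; case: (hF x).
suff H : \sum_(x < #|E|) (kron (F x).1 (F x).2 *m rho0 C a.+1 b.+1 *m
           adjmx (kron (F x).1 (F x).2)) = 2^-1 *: laplacian C E.
  by rewrite H /rhoG scalerA natrM invfM mulrC.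
apply/matrixP => k l; case/mxvec_indexP: k => p1 p2; case/mxvec_indexP: l => q1 q2.
rewrite summxE [RHS]mxE.
transitivity (\sum_(x < #|E|) 2^-1 * gE C (enum_val x) (p1, p2) (q1, q2)).
  by apply: eq_bigr => x _; case: (hF x) => _ _ /(_ (p1, p2) (q1, q2)).
rewrite -mulr_sumr -(big_enum_val (fun e => gE C e (p1, p2) (q1, q2))).
by rewrite sum_g // (lapE C E (p1, p2) (q1, q2)).
Qed.
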